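(* Let $a,e\in\mathbb{R}$, $\omega>0$, and let $\alpha_i(t)$ ($i=1,\dots,4$) be scalar continuous functions. (i) Suppose $\alpha_3(t)$ is $\omega$-periodic and odd, and $a(a+e)<0$. Then the solution $$x(t)=\sqrt{-a(a+e)}\sin\Big(\int_0^t\alpha_3(s)ds\Big),\ y(t)=\sqrt{-a(a+e)}\cos\Big(\int_0^t\alpha_3(s)ds\Big),\ z(t)=-a$$ of the system $$\begin{aligned}\dot x&=(ax+xz)(1+\alpha_1(t))+x(a+z)\alpha_2(t)+y\alpha_3(t),\\ \dot y&=(ay+yz)(1+\alpha_1(t))+y(a+z)\alpha_2(t)-x\alpha_3(t),\\ \dot z&=(ez-x^2-y^2-z^2)(1+\alpha_1(t)+\alpha_2(t))\end{aligned}$$ is $\omega$-periodic (the period not necessarily minimal). (ii) Suppose $\alpha_3(t)+a^4\alpha_4(t)$ is $\omega$-periodic and odd. Then the solution $$x(t)=a\sin\Big(\int_0^t(\alpha_3(s)+a^4\alpha_4(s))ds\Big),\ y(t)=a\cos\Big(\int_0^t(\alpha_3(s)+a^4\alpha_4(s))ds\Big),\ z(t)=-a$$ of the system $$\begin{aligned}\dot x&=(ax+xz)(1+\alpha_1(t))+x(a+z)\alpha_2(t)+y\alpha_3(t)-y(x^2+y^2)(4az+x^2+y^2+2z^2)\alpha_4(t),\\ \dot y&=(ay+yz)(1+\alpha_1(t))+y(a+z)\alpha_2(t)-x\alpha_3(t)+x(x^2+y^2)(4az+x^2+y^2+2z^2)\alpha_4(t),\\ \dot z&=-(2az+x^2+y^2+z^2)(1+\alpha_1(t)+\alpha_2(t))\end{aligned}$$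 is $\omega$-periodic (the period not necessarily minimal). *)

(* Defs.v *)
From Stdlib Require Import Reals.
From Coquelicot Require Export Coquelicot.
Export Reals.
Open Scope R_scope.

Definition periodic (f : R -> R) (w : R) : Prop := forall t, f (t + w) = f t.

Definition odd_fun (f : R -> R) : Prop := forall t, f (- t) = - f t.

(* Main.v *)
Require Import Defs.
From Stdlib Require Import Reals.
From Coquelicot Require Import Coquelicot.
Open Scope R_scope.

From Stdlib Require Import Lra.

Lemma exR (f : R -> R) (hf : forall t, continuous f t) a b : ex_RInt f a b.
Proof. apply (@ex_RInt_continuous R_CompleteNormedModule); intros; apply hf. Qed.

Lemma derR (f : R -> R) (hf : forall t, continuous f t) t :
  is_derive (fun t => RInt f 0 t) t (f t).
Proof.
  apply (is_derive_RInt f (fun t => RInt f 0 t) 0); [|apply hf].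
  exists (mkposreal 1 Rlt_0_1). intros y _. apply (@RInt_correct R_CompleteNormedModule), exR, hf.
Qed.

Lemma perR (f : R -> R) (w : R) (hf : forall t, continuous f t)
  (hp : forall t, f (t + w) = f t) (ho : forall t, f (- t) = - f t) t :
  RInt f 0 (t + w) = RInt f 0 t.
Proof.
  assert (E : forall a b, ex_RInt f a b) by (intros; apply exR, hf).
  assert (Hsh : forall a b, RInt f (a + w) (b + w) = RInt f a b).
  { intros a b.
    replace (a + w) with (1 * a + w) by ring; replace (b + w) with (1 * b + w) by ring.
    rewrite <- (@RInt_comp_lin R_CompleteNormedModule f 1 w a b) by (apply E).
    apply RInt_ext; intros x _. change (scal 1 (f (1 * x + w)) = f x) with (1 * f (1 * x + w) = f x). rewrite !Rmult_1_l, hp; reflexivity. }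
  assert (Hodd : RInt f 0 (- w) = RInt f 0 w).
  { replace (- w) with (-1 * w + 0) by ring.
    replace 0 with (-1 * 0 + 0) at 1 by ring.
    rewrite <- (@RInt_comp_lin R_CompleteNormedModule f (-1) 0 0 w) by (apply E).
    apply RInt_ext; intros x _. rewrite Rplus_0_r.
    replace (-1 * x) with (- x) by ring. rewrite ho.
    unfold scal; simpl; unfold mult; simpl; ring. }
  assert (Hs : RInt f (-w) 0 = RInt f 0 w).
  { rewrite <- (Hsh (-w) 0). f_equal; ring. }
  assert (H0 : RInt f 0 w = 0).
  { rewrite <- (@opp_RInt_swap R_CompleteNormedModule f) in Hodd by apply E.
    rewrite Hs in Hodd. change (opp (RInt f 0 w)) with (- RInt f 0 w) in Hodd. lra. }
  rewrite <- (@RInt_Chasles R_CompleteNormedModule f 0 w (t + w)) by apply E.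
  pose proof (Hsh 0 t) as Ht. rewrite Rplus_0_l in Ht.
  rewrite H0. change (0 + RInt f w (t + w) = RInt f 0 t).
  rewrite Ht. ring.
Qed.

Ltac fixeq := match goal with |- @eq _ ?l ?r => change (@eq R l r) end.

Lemma der_eq (f : R -> R) t l l' : is_derive f t l -> l = l' -> is_derive f t l'.
Proof. intros H ->; exact H. Qed.

Lemma Ls (f : R -> R) (hf : forall t, continuous f t) c t :
  is_derive (fun t => c * sin (RInt f 0 t)) t (c * cos (RInt f 0 t) * f t).
Proof.
  apply der_eq with (scal c (scal (f t) (cos (RInt f 0 t)))).
  - apply is_derive_scal. apply (is_derive_comp sin (fun t => RInt f 0 t)).
    + apply is_derive_sin.
    + apply derR, hf.
  - unfold scal; simpl; unfold mult; simpl; ring.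
Qed.

Lemma Lc (f : R -> R) (hf : forall t, continuous f t) c t :
  is_derive (fun t => c * cos (RInt f 0 t)) t (- (c * sin (RInt f 0 t) * f t)).
Proof.
  apply der_eq with (scal c (scal (f t) (- sin (RInt f 0 t)))).
  - apply is_derive_scal. apply (is_derive_comp cos (fun t => RInt f 0 t)).
    + apply is_derive_cos.
    + apply derR, hf.
  - unfold scal; simpl; unfold mult; simpl; ring.
Qed.

Lemma sc2 x : sin x ^ 2 + cos x ^ 2 = 1.
Proof. pose proof (sin2_cos2 x) as H. unfold Rsqr in H. rewrite <- H. ring. Qed.

Theorem proposition2
  (a e w : R) (alpha1 alpha2 alpha3 alpha4 : R -> R)
  (hw : 0 < w)
  (h1 : forall t, continuous alpha1 t) (h2 : forall t, continuous alpha2 t)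
  (h3 : forall t, continuous alpha3 t) (h4 : forall t, continuous alpha4 t) :
  (* part (i) *)
  (periodic alpha3 w -> odd_fun alpha3 -> a * (a + e) < 0 ->
   let x := fun t => sqrt (- (a * (a + e))) * sin (RInt alpha3 0 t) in
   let y := fun t => sqrt (- (a * (a + e))) * cos (RInt alpha3 0 t) in
   let z := fun _ : R => - a in
   (forall t,
      is_derive x t ((a * x t + x t * z t) * (1 + alpha1 t)
                     + x t * (a + z t) * alpha2 t + y t * alpha3 t) /\
      is_derive y t ((a * y t + y t * z t) * (1 + alpha1 t)
                     + y t * (a + z t) * alpha2 t - x t * alpha3 t) /\
      is_derive z t ((e * z t - x t ^ 2 - y t ^ 2 - z t ^ 2)
                     * (1 + alpha1 t + alpha2 t))) /\
   periodic x w /\ periodic y w /\ periodic z w)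
  /\
  (* part (ii) *)
  (periodic (fun t => alpha3 t + a ^ 4 * alpha4 t) w ->
   odd_fun (fun t => alpha3 t + a ^ 4 * alpha4 t) ->
   let x := fun t => a * sin (RInt (fun s => alpha3 s + a ^ 4 * alpha4 s) 0 t) in
   let y := fun t => a * cos (RInt (fun s => alpha3 s + a ^ 4 * alpha4 s) 0 t) in
   let z := fun _ : R => - a in
   (forall t,
      is_derive x t ((a * x t + x t * z t) * (1 + alpha1 t)
                     + x t * (a + z t) * alpha2 t + y t * alpha3 t
                     - y t * (x t ^ 2 + y t ^ 2)
                       * (4 * a * z t + x t ^ 2 + y t ^ 2 + 2 * z t ^ 2) * alpha4 t) /\
      is_derive y t ((a * y t + y t * z t) * (1 + alpha1 t)
                     + y t * (a + z t) * alpha2 t - x t * alpha3 t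
                     + x t * (x t ^ 2 + y t ^ 2)
                       * (4 * a * z t + x t ^ 2 + y t ^ 2 + 2 * z t ^ 2) * alpha4 t) /\
      is_derive z t (- (2 * a * z t + x t ^ 2 + y t ^ 2 + z t ^ 2)
                     * (1 + alpha1 t + alpha2 t))) /\
   periodic x w /\ periodic y w /\ periodic z w).
Proof.
  split.
  - intros Hp Ho Hk. cbv beta zeta.
    assert (Hs : sqrt (- (a * (a + e))) * sqrt (- (a * (a + e))) = - (a * (a + e)))
      by (apply sqrt_sqrt; lra).
    split; [intros t; split; [|split] | split; [|split]].
    + eapply der_eq; [apply Ls, h3|]. fixeq; ring.
    + eapply der_eq; [apply Lc, h3|]. fixeq; ring.
    + apply (der_eq _ t 0); [apply (@is_derive_const R_AbsRing)|]. fixeq.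
      set (I := RInt alpha3 0 t). set (S := sqrt (- (a * (a + e)))).
      transitivity ((- a * e - S * S * (sin I ^ 2 + cos I ^ 2) - a ^ 2) * (1 + alpha1 t + alpha2 t)).
      * rewrite sc2. fold S in Hs. rewrite Hs. ring.
      * ring.
    + intros t. rewrite (perR alpha3 w h3 Hp Ho t). reflexivity.
    + intros t. rewrite (perR alpha3 w h3 Hp Ho t). reflexivity.
    + intros t. reflexivity.
  - intros Hp Ho. cbv beta zeta.
    set (g := fun s => alpha3 s + a ^ 4 * alpha4 s).
    assert (hg : forall t, continuous g t).
    { intros t. unfold g.
      apply (@continuous_plus R_UniformSpace R_AbsRing R_NormedModule alpha3 (fun s => a ^ 4 * alpha4 s)); [apply h3|].
      apply (@continuous_mult R_UniformSpace R_AbsRing (fun _ => a ^ 4) alpha4); [apply continuous_const | apply h4]. }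
    split; [intros t; split; [|split] | split; [|split]].
    + eapply der_eq; [apply Ls, hg|]. fixeq. set (I := RInt g 0 t).
      apply Rminus_diag_uniq.
      transitivity (a ^ 5 * cos I * alpha4 t * (sin I ^ 2 + cos I ^ 2 - 1) ^ 2).
      * unfold g. ring.
      * rewrite sc2. ring.
    + eapply der_eq; [apply Lc, hg|]. fixeq. set (I := RInt g 0 t).
      apply Rminus_diag_uniq.
      transitivity (- a ^ 5 * sin I * alpha4 t * (sin I ^ 2 + cos I ^ 2 - 1) ^ 2).
      * unfold g. ring.
      * rewrite sc2. ring.
    + apply (der_eq _ t 0); [apply (@is_derive_const R_AbsRing)|]. fixeq. set (I := RInt g 0 t).
      transitivity (- (a ^ 2 * (sin I ^ 2 + cos I ^ 2 - 1)) * (1 + alpha1 t + alpha2 t)).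
      * rewrite sc2. ring.
      * ring.
    + intros t. rewrite (perR g w hg Hp Ho t). reflexivity.
    + intros t. rewrite (perR g w hg Hp Ho t). reflexivity.
    + intros t. reflexivity.
Qed.
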